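(* Let $G_0=(V,E_0)$ and $G_1=(V,E_1)$ be strongly connected unweighted directed graphs on the same $n$-vertex set, let $n_p,n_q\ge1$ be integers, let $S_1\subseteq V$ with $|S_1|=n_p$, let $a\in V$, and let $S_2=N^{in}_{G_0}(a,n_q)$. Let $\ell_0=\max_{x\in V}d_{G_0}(S_1,x)$, let $\epsilon\in[0,1/2]$, and suppose that both $\max_{x\in V}d_{G_1}(S_1,x)$ and $d_{G_1}(S_1,a)$ lie in $[\ell_0(1-\epsilon),\ell_0(1+\epsilon)]$, and that $S_1\cap S_2\neq\emptyset$. Write $\delta=\mathrm{inecc}_{G_1}(a)$. Suppose moreover that either (i) $E_1\subseteq E_0$ and $d_{G_0}(S_1,a)\ge(1-\epsilon)\ell_0$; or (ii) $E_0\subseteq E_1$ and $\mathrm{inecc}_{G_1}(a)\ge(1-\epsilon)\,\mathrm{inecc}_{G_0}(a)$. Then for all reals $p,q>0$ with $p+q=1$, in the graph $G_1$ either $d_{G_1}(S_1,x)\le\lfloor(p+2\epsilon)\delta\rfloor$ for every $x\in V$, or $d_{G_1}(x,S_2)\le\lceil(q+2\epsilon)\delta\rceil$ for every $x\in V$.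
   Context: $d_G(u,v)$ is the directed shortest-path distance in $G$; $d_G(A,u)=\min_{v\in A}d_G(v,u)$, $d_G(u,A)=\min_{v\in A}d_G(u,v)$; $\mathrm{inecc}_G(a)=\max_{x}d_G(x,a)$. $N^{in}_G(a,\ell)$ denotes a set of $\ell$ vertices $x$ with the smallest values of $d_G(x,a)$ (ties broken arbitrarily), i.e. the $\ell$ closest incoming vertices of $a$. *)

(* Defs.v *)
From HB Require Import structures.
From mathcomp Require Import all_boot all_order all_algebra.
Set Implicit Arguments. Unset Strict Implicit. Unset Printing Implicit Defensive.

Definition walkn (T : finType) (e : rel T) (k : nat) (x y : T) : bool :=
  [exists p : k.-tuple T, path e x p && (last x p == y)].

(* A shortest walk, if any, has fewer than #|T| edges, so we search
   k in [0, #|T|); the value #|T| is returned only when y is unreachable from x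
   (never the case in the strongly connected graphs considered). *)
Definition dist (T : finType) (e : rel T) (x y : T) : nat :=
  find (fun k => walkn e k x y) (iota 0 #|T|).

Definition strongly_connected (T : finType) (e : rel T) : Prop :=
  forall x y : T, connect e x y.

Definition dist_from_set (T : finType) (e : rel T) (A : {set T}) (u : T) : nat :=
  \big[minn/#|T|]_(v in A) dist e v u.
Definition dist_to_set (T : finType) (e : rel T) (u : T) (A : {set T}) : nat :=
  \big[minn/#|T|]_(v in A) dist e u v.

Definition inecc (T : finType) (e : rel T) (a : T) : nat := \max_(x : T) dist e x a.

(* S is a valid choice of N^in_e(a,l): l vertices with the smallest values of
   d(x,a), ties broken arbitrarily. *)
Definition is_Nin (T : finType) (e : rel T) (a : T) (l : nat) (S : {set T}) : Prop :=
  #|S| = l /\ forall x y : T, x \in S -> y \notin S -> dist e x a <= dist e y a.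

(* Main.v *)
Require Import Defs.
From HB Require Import structures.
From mathcomp Require Import all_boot all_order all_algebra.
From mathcomp Require Import zify ring lra.
Import Order.TTheory GRing.Theory Num.Theory.

Set Implicit Arguments. Unset Strict Implicit.
Section Helpers.
Variables (T : finType).

Lemma walknP (e : rel T) k x y :
  reflect (exists p : seq T, [/\ size p = k, path e x p & last x p = y]) (walkn e k x y).
Proof.
apply: (iffP existsP) => [[p /andP[hp /eqP hl]] | [p [hs hp hl]]].
- by exists (tval p); rewrite size_tuple.
- have hs' : size p == k by apply/eqP.
  by exists (Tuple hs'); rewrite /= hp hl eqxx.
Qed.

Lemma dist_le (e : rel T) k x y : walkn e k x y -> (dist e x y <= k)%N.
Proof.
move=> w; rewrite /dist; case: (ltnP k #|T|) => hk.
- rewrite leqNgt; apply/negP => hf.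
  have := before_find 0 hf; rewrite nth_iota // add0n w //.
- by apply: leq_trans hk; rewrite -[X in (_ <= X)%N](size_iota 0) find_size.
Qed.

Lemma dist_walk (e : rel T) x y : connect e x y -> walkn e (dist e x y) x y.
Proof.
move/connectP=> [p hp ->]; case/shortenP: hp => p' hp' hu _.
have hs : (size p' < #|T|)%N.
  by have := max_card (mem (x :: p')); rewrite (card_uniqP hu).
have hw : walkn e (size p') x (last x p') by apply/walknP; exists p'.
have hh : has (fun k => walkn e k x (last x p')) (iota 0 #|T|).
  by apply/hasP; exists (size p'); rewrite // mem_iota.
have hf := hh; rewrite has_find size_iota in hf.
by have := nth_find 0 hh; rewrite /dist nth_iota ?add0n.
Qed.

Lemma walk_sub (e e' : rel T) k x y : (forall u v, e u v -> e' u v) ->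
  walkn e k x y -> walkn e' k x y.
Proof.
move=> h /walknP[p [hs hp hl]]; apply/walknP; exists p; split => //.
exact: sub_path hp.
Qed.

Lemma dist_mono (e e' : rel T) x y : (forall u v, e u v -> e' u v) ->
  connect e x y -> (dist e' x y <= dist e x y)%N.
Proof. move=> h c; apply: dist_le; apply: (walk_sub h); exact: dist_walk. Qed.

Lemma walk_split (e : rel T) k j x y : (j <= k)%N -> walkn e k x y ->
  exists z, walkn e (k - j) x z && walkn e j z y.
Proof.
move=> hj /walknP[p [hs hp hl]].
exists (last x (take (k - j) p)); apply/andP; split; apply/walknP.
- exists (take (k - j) p); split => //.
  + by rewrite size_takel // hs leq_subr.
  + by move: hp; rewrite -{1}(cat_take_drop (k - j) p) cat_path => /andP[? ?].
- exists (drop (k - j) p); split.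
  + by rewrite size_drop hs subKn.
  + by move: hp; rewrite -{1}(cat_take_drop (k - j) p) cat_path => /andP[? ?].
  + by rewrite -hl -{3}(cat_take_drop (k - j) p) last_cat.
Qed.

Lemma bigmin_le (I : eqType) (s : seq I) (P : pred I) (F : I -> nat) n v :
  v \in s -> P v -> (\big[minn/n]_(i <- s | P i) F i <= F v)%N.
Proof.
elim: s => [//|w s IH]; rewrite inE big_cons => /orP[/eqP <-|hs] hP.
- by rewrite hP geq_minl.
- by case: (P w); [apply: leq_trans (geq_minr _ _) (IH hs hP) | apply: IH].
Qed.

Lemma dfs_le (e : rel T) (A : {set T}) u v : v \in A -> (dist_from_set e A u <= dist e v u)%N.
Proof. by move=> vA; apply: bigmin_le; rewrite ?mem_index_enum. Qed.

Lemma dts_le (e : rel T) (A : {set T}) u v : v \in A -> (dist_to_set e u A <= dist e u v)%N.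
Proof. by move=> vA; apply: bigmin_le; rewrite ?mem_index_enum. Qed.

Lemma dfs_ub (e : rel T) (A : {set T}) u : (dist_from_set e A u <= #|T|)%N.
Proof.
rewrite /dist_from_set; apply: (big_ind (fun z => z <= #|T|)%N) => //.
- by move=> a b ha _; apply: leq_trans (geq_minl _ _) ha.
- by move=> i _; rewrite /dist -[X in (_ <= X)%N](size_iota 0) find_size.
Qed.

Lemma dfs_ge (e : rel T) (A : {set T}) u m : (m <= #|T|)%N ->
  (forall v, v \in A -> m <= dist e v u)%N -> (m <= dist_from_set e A u)%N.
Proof.
move=> hm h; rewrite /dist_from_set; apply: (big_ind (fun z => m <= z)%N) => //.
by move=> a b ha hb; rewrite leq_min ha hb.
Qed.

End Helpers.
Unset Implicit Arguments. Set Strict Implicit.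

Lemma arith1 (t k D : nat) : (0 < D)%N -> (t <= k - minn k D.-1)%N ->
  (t = 0 \/ t + D <= k + 1)%N.
Proof. move=> h1 h2; rewrite /minn in h2; case: ifP h2 => _ h2; lia. Qed.

Lemma ceil_nat (R : archiRealFieldType) (m : nat) (r : R) :
  ((m%:R - 1 < r) -> (Posz m <= Num.ceil r))%R.
Proof.
move=> h; have := ceil_gt_int r (Posz m - 1)%R.
by rewrite rmorphB /= h ltrBlDr ltzD1.
Qed.

Theorem lemma3p3 (R : archiRealFieldType) (T : finType) (e0 e1 : rel T)
  (np nq : nat) (S1 S2 : {set T}) (a : T) (eps : R) :
  strongly_connected e0 -> strongly_connected e1 ->
  (1 <= np)%N -> (1 <= nq)%N ->
  #|S1| = np ->
  is_Nin e0 a nq S2 ->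
  (0 <= eps)%R -> (eps <= 1 / 2)%R ->
  let l0 := (\max_(x : T) dist_from_set e0 S1 x)%N in
  (l0%:R * (1 - eps) <= (\max_(x : T) dist_from_set e1 S1 x)%:R)%R ->
  ((\max_(x : T) dist_from_set e1 S1 x)%:R <= l0%:R * (1 + eps))%R ->
  (l0%:R * (1 - eps) <= (dist_from_set e1 S1 a)%:R)%R ->
  ((dist_from_set e1 S1 a)%:R <= l0%:R * (1 + eps))%R ->
  S1 :&: S2 != set0 ->
  let delta := inecc e1 a in
  ((forall x y, e1 x y -> e0 x y) /\ ((1 - eps) * l0%:R <= (dist_from_set e0 S1 a)%:R)%R)
  \/ ((forall x y, e0 x y -> e1 x y) /\ ((1 - eps) * (inecc e0 a)%:R <= (inecc e1 a)%:R)%R) ->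
  forall p q : R, (0 < p)%R -> (0 < q)%R -> (p + q = 1)%R ->
    (forall x : T, ((dist_from_set e1 S1 x)%:Z <= Num.floor ((p + 2 * eps) * delta%:R))%R)
    \/ (forall x : T, ((dist_to_set e1 x S2)%:Z <= Num.ceil ((q + 2 * eps) * delta%:R))%R).
Proof.
move=> sc0 sc1 hnp hnq hS1 [hS2c hS2] he0 he1 l0 hl1lo hl1hi hAlo hAhi hS12 delta
  hcase p q hp hq hpq.
case/set0Pn: hS12 => s; rewrite inE => /andP[sS1 sS2].
set D := dist e0 s a.
have inS2 : forall y, (dist e0 y a < D)%N -> y \in S2.
  move=> y hy; apply/contraT => hn; have := hS2 s y sS2 hn.
  by rewrite leqNgt hy.
have [hall|] := boolP [forall x, ((dist_from_set e1 S1 x)%:Z <=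
                         Num.floor ((p + 2 * eps) * delta%:R))%R].
  by left => x; exact: (forallP hall x).
rewrite negb_forall => /existsP[x0]; rewrite -ltNge floor_lt_int -pmulrn => hx0.
right => x.
set r := ((q + 2 * eps) * delta%:R)%R.
have dr0 : (0 <= delta%:R :> R)%R by rewrite ler0n.
have r0 : (0 <= r)%R by rewrite /r; apply: mulr_ge0 => //; lra.
have key : forall g : rel T, (forall u v, g u v -> e0 u v) ->
    (forall u v, g u v -> e1 u v) -> connect g x a -> (0 < D)%N ->
    ((dist g x a)%:R - D%:R < r)%R -> ((dist_to_set e1 x S2)%:Z <= Num.ceil r)%R.
  move=> g hg0 hg1 c hD hr.
  set k := dist g x a.
  have w := dist_walk c.
  have [z /andP[w1 w2]] := walk_split (geq_minl k D.-1) w.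
  have zS2 : z \in S2.
    apply: inS2; apply: leq_ltn_trans (dist_le (walk_sub hg0 w2)) _.
    by apply: leq_ltn_trans (geq_minr _ _) _; rewrite ltn_predL.
  apply: ceil_nat.
  have h1 := dist_le (walk_sub hg1 w1).
  have h2 := dts_le e1 x zS2.
  have h3 : (dist_to_set e1 x S2 <= k - minn k D.-1)%N by apply: leq_trans h2 h1.
  have : (dist_to_set e1 x S2 = 0 \/ dist_to_set e1 x S2 + D <= k + 1)%N.
    exact: arith1 hD h3.
  case => [->|h4]; first by rewrite mulr0n sub0r; lra.
  have h5 : ((dist_to_set e1 x S2 + D)%:R <= (k + 1)%:R :> R)%R by rewrite ler_nat.
  rewrite !natrD in h5; lra.
have ep1 : (0 < 1 - eps)%R by lra.
case: hcase => [[h10 hA0] | [h01 hin]].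
- have hk : (dist e1 x a <= delta)%N by rewrite /delta /inecc; exact: (leq_bigmax (F := fun y => dist e1 y a)).
  have hL1 : (dist_from_set e1 S1 x0 <= \max_(x : T) dist_from_set e1 S1 x)%N.
    exact: (leq_bigmax (F := fun y => dist_from_set e1 S1 y)).
  have hA0D : (dist_from_set e0 S1 a <= D)%N by apply: dfs_le.
  move: hk hL1 hA0D; rewrite -!(ler_nat R) => hk hL1 hA0D.
  move: hx0 hk hL1 hA0D hl1hi hA0.
  set L1 := ((dist_from_set e1 S1 x0)%:R : R)%R.
  set l1 := (((\max_(x : T) dist_from_set e1 S1 x)%N)%:R : R)%R.
  set A0 := ((dist_from_set e0 S1 a)%:R : R)%R.
  set Dr := ((D)%:R : R)%R; set kr := ((dist e1 x a)%:R : R)%R; set dr := ((delta)%:R : R)%R; set l0r := ((l0)%:R : R)%R.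
  move=> hx0 hk hL1 hA0D hl1hi hA0.
  have hL1p : (0 < L1)%R by nra.
  have hA : ((1 + eps) * Dr >= (1 - eps) * L1)%R by nra.
  have hDp : (0 < Dr)%R by nra.
  have hDD : ((p - 2 * eps) * dr < Dr)%R.
    have hC : ((1 - eps) * (p + 2 * eps) * dr < (1 - eps) * L1)%R by nra.
    have hE : (0 <= eps * (4 - 2 * p) * dr)%R.
      apply: mulr_ge0 => //; apply: mulr_ge0 => //; lra.
    nra.
  apply: (key e1 h10 (fun _ _ h => h) (sc1 x a)).
    by rewrite -(ltr_nat R).
  rewrite /r; nra.
- have hk : (dist e0 x a <= inecc e0 a)%N by rewrite /inecc; exact: (leq_bigmax (F := fun y => dist e0 y a)).
  have hL0 : (dist_from_set e1 S1 x0 <= dist_from_set e0 S1 x0)%N.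
    apply: dfs_ge; first exact: dfs_ub.
    move=> v vS; apply: leq_trans (dfs_le e1 x0 vS) _.
    exact: (dist_mono h01 (sc0 v x0)).
  have hl0 : (dist_from_set e0 S1 x0 <= l0)%N.
    exact: (leq_bigmax (F := fun y => dist_from_set e0 S1 y)).
  have hA1D : (dist_from_set e1 S1 a <= D)%N.
    apply: leq_trans (dfs_le e1 a sS1) _; exact: (dist_mono h01 (sc0 s a)).
  move: hk hL0 hl0 hA1D; rewrite -!(ler_nat R) => hk hL0 hl0 hA1D.
  move: hx0 hk hL0 hl0 hA1D hAlo hin.
  set L1 := ((dist_from_set e1 S1 x0)%:R : R)%R.
  set L0 := ((dist_from_set e0 S1 x0)%:R : R)%R.
  set A1 := ((dist_from_set e1 S1 a)%:R : R)%R.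
  set Dr := ((D)%:R : R)%R; set kr := ((dist e0 x a)%:R : R)%R; set dr := ((inecc e1 a)%:R : R)%R.
  set d0 := ((inecc e0 a)%:R : R)%R; set l0r := ((l0)%:R : R)%R.
  move=> hx0 hk hL0 hl0 hA1D hAlo hin.
  have hL1p : (0 < L1)%R by nra.
  have hDp : (0 < Dr)%R by nra.
  apply: (key e0 (fun _ _ h => h) h01 (sc0 x a)).
    by rewrite -(ltr_nat R).
  have h1 : ((1 - eps) * kr <= dr)%R by nra.
  have h2 : ((1 - eps) * (1 - eps) * (p + 2 * eps) * dr < (1 - eps) * Dr)%R.
    have : ((1 - eps) * (p + 2 * eps) * dr < (1 - eps) * L1)%R by nra.
    have : ((1 - eps) * L1 <= Dr)%R by nra.
    nra.
  have h3 : (0 <= eps * ((4 - p - 2 * eps) * (1 - eps) - 1) * dr)%R.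
    apply: mulr_ge0 => //; apply: mulr_ge0 => //; nra.
  have h4 : ((1 - eps) * (kr - Dr) < (1 - eps) * r)%R by rewrite /r; nra.
  nra.
Qed.
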